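(* Let $X=(X_0,X_1)$ be an infinite tree of bounded valence in which every vertex has at least three neighbours, let $\Gamma<\operatorname{Aut}(X)$ be a subgroup of automorphisms such that $\Gamma\backslash X_0$ is finite, and let $p:X_0\times X_0\to[0,1]$ be a $\Gamma$-invariant transition kernel making $(X_0,p)$ an irreducible Markov chain, of finite range: there is an integer $k\geq 0$ with $p(x,y)=0$ whenever $d(x,y)>k$. Let $x,y\in X_0$ and suppose that for every integer $M\geq 0$ there exists a $p$-admissible path $(\omega_0,\dots,\omega_n)\in\mathcal{P}h(x,y;\{y\}^\complement)$ with $\max_i d(\omega_i,y)\geq M$. Then the radius of convergence $R_F(x,y)$ of the first-passage generating function $F_z(x,y)$ equals $R$.
   Context: $d$ is the graph distance on $X_0$. A $p$-admissible path is a finite sequence of vertices $(\omega_0,\dots,\omega_n)$ with $p(\omega_{i-1},\omega_i)>0$ for $1\leq i\leq n$; its weight at $z$ is $w_z(\gamma)=z^n\prod_{i=1}^n p(\omega_{i-1},\omega_i)$. $\mathcal{P}h(x,y;\{y\}^\complement)$ denotes the set of $p$-admissible paths $(\omega_0,\dots,\omega_n)$ with $\omega_0=x$, $\omega_n=y$ and $\omega_i\neq y$ for $0<i<n$. The first-passage generating function is $F_z(x,y)=\sum_{\gamma\in\mathcal{P}h(x,y;\{y\}^\complement)}w_z(\gamma)=\sum_{n\geq 0}p^{(n)}(x,y;\{y\}^\complement)z^n$, and $R_F(x,y)$ is its radius of convergence. $R$ is the radius of convergence of the Green function $G_z(x',y')=\sum_{n\geq 0}p^{(n)}(x',y')z^n$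 (where $p^{(n)}$ is the $n$-step transition probability), which by irreducibility does not depend on $x',y'$. *)

(* Defs.v *)
From Stdlib Require Import Reals List Arith Lia ClassicalEpsilon.
From Coquelicot Require Import Coquelicot.
Import ListNotations.
Open Scope R_scope.

Set Implicit Arguments.

(** Sum of [f] over a finite set [P] (0 if [P] is not finite).  The value
    does not depend on the chosen duplicate-free enumeration. *)
Definition fsum {T : Type} (P : T -> Prop) (f : T -> R) : R :=
  match excluded_middle_informative
          (exists l : list T, NoDup l /\ forall t, P t <-> In t l) with
  | left H =>
      fold_right (fun t acc => f t + acc) 0
        (proj1_sig (constructive_indefinite_description _ H))
  | right _ => 0
  end.

Fixpoint chain {V : Type} (r : V -> V -> Prop) (g : list V) : Prop :=
  match g with
  | a :: ((b :: _) as t) => r a b /\ chain r t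
  | _ => True
  end.

Fixpoint nonbacktracking {V : Type} (g : list V) : Prop :=
  match g with
  | a :: ((_ :: c :: _) as t) => a <> c /\ nonbacktracking t
  | _ => True
  end.

Definition path_from_to {V : Type} (r : V -> V -> Prop) (g : list V)
  (x y : V) (n : nat) : Prop :=
  length g = S n /\ chain r g /\ nth 0 g x = x /\ nth n g x = y.

Definition is_tree {V : Type} (adj : V -> V -> Prop) : Prop :=
  (forall x y, adj x y -> adj y x) /\
  (forall x, ~ adj x x) /\
  (forall x y, exists g n, path_from_to adj g x y n) /\
  (* no cycles: every non-backtracking walk of positive length
     has distinct endpoints *)
  (forall g x y n, path_from_to adj g x y n -> (0 < n)%nat ->
      nonbacktracking g -> x <> y).

Definition infinite_type (V : Type) : Prop :=
  ~ exists l : list V, forall v, In v l.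

Definition bounded_valence {V : Type} (adj : V -> V -> Prop) : Prop :=
  exists D : nat, forall x, exists l : list V,
    (length l <= D)%nat /\ forall y, adj x y -> In y l.

Definition min_degree_3 {V : Type} (adj : V -> V -> Prop) : Prop :=
  forall x, exists a b c, adj x a /\ adj x b /\ adj x c /\
    a <> b /\ a <> c /\ b <> c.

Definition dist_gt {V : Type} (adj : V -> V -> Prop) (x y : V) (k : nat) : Prop :=
  forall g n, path_from_to adj g x y n -> (k < n)%nat.
Definition dist_ge {V : Type} (adj : V -> V -> Prop) (x y : V) (M : nat) : Prop :=
  forall g n, path_from_to adj g x y n -> (M <= n)%nat.

Definition is_automorphism {V : Type} (adj : V -> V -> Prop) (f : V -> V) : Prop :=
  (exists g : V -> V, (forall v, g (f v) = v) /\ (forall v, f (g v) = v)) /\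
  (forall x y, adj x y <-> adj (f x) (f y)).

Definition is_subgroup_Aut {V : Type} (adj : V -> V -> Prop)
  (Gamma : (V -> V) -> Prop) : Prop :=
  (forall f, Gamma f -> is_automorphism adj f) /\
  Gamma (fun v => v) /\
  (forall f g, Gamma f -> Gamma g -> Gamma (fun v => f (g v))) /\
  (forall f, Gamma f -> exists g, Gamma g /\ forall v, g (f v) = v /\ f (g v) = v).

Definition finite_quotient {V : Type} (Gamma : (V -> V) -> Prop) : Prop :=
  exists l : list V, forall x, exists f v, Gamma f /\ In v l /\ x = f v.

Definition transition_kernel {V : Type} (p : V -> V -> R) : Prop :=
  (forall x y, 0 <= p x y <= 1) /\
  (forall x, fsum (fun y => 0 < p x y) (fun y => p x y) = 1).

(** Product of the transition probabilities along a path
    (the weight w_z(gamma) is z^n times this). *)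
Fixpoint path_prob {V : Type} (p : V -> V -> R) (g : list V) : R :=
  match g with
  | a :: ((b :: _) as t) => p a b * path_prob p t
  | _ => 1
  end.

Definition p_admissible {V : Type} (p : V -> V -> R) (g : list V) : Prop :=
  chain (fun a b => 0 < p a b) g.

Definition pn {V : Type} (p : V -> V -> R) (n : nat) (x y : V) : R :=
  fsum (fun g => path_from_to (fun a b => 0 < p a b) g x y n) (path_prob p).

Definition in_Ph_first {V : Type} (p : V -> V -> R) (x y : V) (g : list V) : Prop :=
  exists n, path_from_to (fun a b => 0 < p a b) g x y n /\
    forall i, (0 < i < n)%nat -> nth i g x <> y.

(** p^(n)(x,y;{y}^c): coefficient of z^n in F_z(x,y). *)
Definition fpn {V : Type} (p : V -> V -> R) (n : nat) (x y : V) : R :=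
  fsum (fun g => in_Ph_first p x y g /\ length g = S n) (path_prob p).

Definition irreducible {V : Type} (p : V -> V -> R) : Prop :=
  forall x y, exists n, 0 < pn p n x y.

(* Main.v *)
Require Import Defs.
From Stdlib Require Import Reals List Arith.
From Coquelicot Require Import Coquelicot.
From Stdlib Require Import Lra Lia Permutation Classical ClassicalEpsilon
  FunctionalExtensionality PropExtensionality ZArith.
Import ListNotations.
Open Scope R_scope.

Definition sumf {T : Type} (f : T -> R) (l : list T) : R :=
  fold_right (fun t acc => f t + acc) 0 l.

Lemma sumf_app {T} (f : T -> R) l1 l2 : sumf f (l1 ++ l2) = sumf f l1 + sumf f l2.
Proof. induction l1; simpl; [lra| rewrite IHl1; lra]. Qed.

Lemma sumf_perm {T} (f : T -> R) l l' : Permutation l l' -> sumf f l = sumf f l'.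
Proof. induction 1; simpl; try lra. Qed.

Definition finite {T} (P : T -> Prop) := exists L, forall t, P t -> In t L.

Lemma fin_enum {T} (P : T -> Prop) : finite P ->
  exists l, NoDup l /\ forall t, P t <-> In t l.
Proof.
  intros [L HL]. revert P HL. induction L as [|a L IH]; intros P HL.
  - exists []. split; [constructor|]. intro t; split; [apply HL|intros []].
  - destruct (IH (fun t => P t /\ t <> a)) as [l [Hn Hl]].
    { intros t [Ht Hne]. destruct (HL t Ht); [congruence|auto]. }
    destruct (classic (P a)) as [Pa|nPa].
    + exists (a :: l). split.
      * constructor; auto. intro Hin. apply Hl in Hin. tauto.
      * intro t. split.
        -- intro Ht. destruct (classic (t = a)); [left; auto|right; apply Hl; auto].
        -- intros [<-|Hin]; auto. apply Hl in Hin; tauto.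
    + exists l. split; auto. intro t. split.
      * intro Ht. apply Hl. split; auto. intro; subst; tauto.
      * intro Hin. apply Hl in Hin; tauto.
Qed.

Lemma fsum_enum {T} (P : T -> Prop) f l : NoDup l -> (forall t, P t <-> In t l) ->
  fsum P f = sumf f l.
Proof.
  intros Hn Hl. unfold fsum.
  destruct excluded_middle_informative as [H|H].
  - destruct (constructive_indefinite_description _ H) as [l' [Hn' Hl']]. simpl.
    change (sumf f l' = sumf f l). apply sumf_perm.
    apply NoDup_Permutation; auto. intro t. rewrite <- Hl, Hl'. tauto.
  - exfalso. apply H. exists l. auto.
Qed.

Lemma sumf_incl {T} (f : T -> R) l0 : NoDup l0 -> forall l, incl l0 l ->
  (forall t, In t l -> 0 <= f t) -> sumf f l0 <= sumf f l.
Proof.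
  induction 1 as [|a l0 Hna Hn IH]; intros l Hinc Hpos.
  - simpl. clear Hinc. induction l; simpl; [lra|].
    assert (0 <= f a) by (apply Hpos; left; auto).
    assert (0 <= sumf f l) by (apply IHl; intros; apply Hpos; right; auto). lra.
  - assert (Ha : In a l) by (apply Hinc; left; auto).
    destruct (in_split _ _ Ha) as [l1 [l2 ->]].
    rewrite (sumf_perm f (l1 ++ a :: l2) (a :: l1 ++ l2)) by (symmetry; apply Permutation_middle).
    simpl. assert (sumf f l0 <= sumf f (l1 ++ l2)); [|lra].
    apply IH.
    + intros t Ht. assert (Ht' : In t (l1 ++ a :: l2)) by (apply Hinc; right; auto).
      apply in_app_or in Ht'. apply in_or_app. destruct Ht' as [?|[<-|?]]; auto. tauto.
    + intros t Ht. apply Hpos. apply in_app_or in Ht. apply in_or_app.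
      destruct Ht; auto. right; right; auto.
Qed.

Lemma fsum_ge_list {T} (P : T -> Prop) f l0 : finite P -> (forall t, P t -> 0 <= f t) ->
  NoDup l0 -> (forall t, In t l0 -> P t) -> sumf f l0 <= fsum P f.
Proof.
  intros HF Hpos Hn0 Hl0. destruct (fin_enum P HF) as [l [Hn Hl]].
  rewrite (fsum_enum P f l Hn Hl). apply sumf_incl; auto.
  - intros t Ht. apply Hl, Hl0, Ht.
  - intros t Ht. apply Hpos, Hl, Ht.
Qed.

Lemma fsum_nonneg {T} (P : T -> Prop) f : finite P -> (forall t, P t -> 0 <= f t) ->
  0 <= fsum P f.
Proof. intros. apply (fsum_ge_list P f []); auto. constructor. intros _ []. Qed.

Lemma fsum_ge_one {T} (P : T -> Prop) f t : finite P -> (forall t, P t -> 0 <= f t) ->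
  P t -> f t <= fsum P f.
Proof.
  intros. replace (f t) with (sumf f [t]) by (simpl; lra).
  apply fsum_ge_list; auto. repeat constructor; auto. intros u [<-|[]]; auto.
Qed.

Lemma NoDup_map_on {A B} (h : A -> B) l : NoDup l ->
  (forall a b, In a l -> In b l -> h a = h b -> a = b) -> NoDup (map h l).
Proof.
  induction 1 as [|a l Hna Hn IH]; intros Hinj; simpl; constructor.
  - intro Hin. apply in_map_iff in Hin as [b [Hb Hbin]].
    assert (b = a) by (apply Hinj; simpl; auto). subst; tauto.
  - apply IH. intros; apply Hinj; simpl; auto.
Qed.

Lemma fsum_image {A B} (P : A -> Prop) (Q : B -> Prop) (h : A -> B) wA wB :
  finite P -> finite Q -> (forall b, Q b -> 0 <= wB b) ->
  (forall a, P a -> Q (h a)) -> (forall a, P a -> wB (h a) = wA a) ->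
  (forall a b, P a -> P b -> h a = h b -> a = b) ->
  fsum P wA <= fsum Q wB.
Proof.
  intros HP HQ Hpos HPQ Hw Hinj. destruct (fin_enum P HP) as [l [Hn Hl]].
  rewrite (fsum_enum P wA l Hn Hl).
  replace (sumf wA l) with (sumf wB (map h l)).
  - apply fsum_ge_list; auto.
    + apply NoDup_map_on; auto. intros a b Ha Hb. apply Hinj; apply Hl; auto.
    + intros t Ht. apply in_map_iff in Ht as [a [<- Ha]]. apply HPQ, Hl, Ha.
  - assert (H: forall a, In a l -> P a) by (intros; apply Hl; auto). clear Hn Hl.
    induction l; simpl; auto. rewrite Hw, IHl; auto. intros; apply H; simpl; auto.
    apply H; simpl; auto.
Qed.

Lemma NoDup_prod {A B} (l1 : list A) (l2 : list B) : NoDup l1 -> NoDup l2 ->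
  NoDup (list_prod l1 l2).
Proof.
  induction 1 as [|a l1 Hna Hn IH]; intros H2; simpl; [constructor|].
  apply NoDup_app; auto.
  - apply NoDup_map_on; auto. intros b c _ _ E. congruence.
  - intros [u v] H1 H1'. apply in_map_iff in H1 as [c [E _]]. inversion E; subst.
    apply in_prod_iff in H1'. tauto.
Qed.

Lemma sumf_prod {A B} (f1 : A -> R) (f2 : B -> R) l1 l2 :
  sumf (fun pr => f1 (fst pr) * f2 (snd pr)) (list_prod l1 l2) = sumf f1 l1 * sumf f2 l2.
Proof.
  induction l1; simpl; [lra|]. rewrite sumf_app, IHl1.
  assert (E : sumf (fun pr : A * B => f1 (fst pr) * f2 (snd pr)) (map (fun y => (a, y)) l2)
     = f1 a * sumf f2 l2).
  { clear IHl1. induction l2; simpl; [lra|]. rewrite IHl2. lra. }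
  rewrite E. lra.
Qed.

Lemma fsum_prod {A B} (P1 : A -> Prop) (P2 : B -> Prop) w1 w2 :
  finite P1 -> finite P2 ->
  fsum (fun pr => P1 (fst pr) /\ P2 (snd pr)) (fun pr => w1 (fst pr) * w2 (snd pr))
  = fsum P1 w1 * fsum P2 w2.
Proof.
  intros H1 H2. destruct (fin_enum P1 H1) as [l1 [Hn1 Hl1]].
  destruct (fin_enum P2 H2) as [l2 [Hn2 Hl2]].
  rewrite (fsum_enum P1 w1 l1), (fsum_enum P2 w2 l2); auto.
  rewrite <- sumf_prod. apply fsum_enum. apply NoDup_prod; auto.
  intros [a b]; simpl. rewrite in_prod_iff, Hl1, Hl2. tauto.
Qed.

Lemma finite_prod {A B} (P1 : A -> Prop) (P2 : B -> Prop) : finite P1 -> finite P2 ->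
  finite (fun pr => P1 (fst pr) /\ P2 (snd pr)).
Proof.
  intros [L1 H1] [L2 H2]. exists (list_prod L1 L2). intros [a b] [Ha Hb].
  apply in_prod_iff; auto.
Qed.

Lemma finite_sub {T} (P Q : T -> Prop) : finite Q -> (forall t, P t -> Q t) -> finite P.
Proof. intros [L H] HPQ. exists L. auto. Qed.

Section Paths.
Context {V : Type}.

Lemma chain_nth (r : V -> V -> Prop) (g : list V) :
  chain r g <-> forall j d, (S j < length g)%nat -> r (nth j g d) (nth (S j) g d).
Proof.
  induction g as [|a t IH].
  - simpl. split; auto. intros _ j d H. lia.
  - destruct t as [|b t'].
    + simpl. split; auto. intros _ j d H. lia.
    + change (chain r (a :: b :: t')) with (r a b /\ chain r (b :: t')). rewrite IH.
      split.
      * intros [Hab H] j d Hj. destruct j; simpl; auto. apply H. simpl in *; lia.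
      * intros H. split. apply (H 0%nat a). simpl; lia.
        intros j d Hj. apply (H (S j) d). simpl in *; lia.
Qed.

Definition path' (r : V -> V -> Prop) g a b n :=
  length g = S n /\ (forall j d, (j < n)%nat -> r (nth j g d) (nth (S j) g d)) /\
  (forall d, nth 0 g d = a) /\ (forall d, nth n g d = b).

Lemma path_iff r g a b n : path_from_to r g a b n <-> path' r g a b n.
Proof.
  unfold path_from_to, path'. rewrite chain_nth. split.
  - intros [Hl [Hc [H0 Hn]]]. repeat split; auto.
    + intros j d Hj. apply Hc. lia.
    + intro d. rewrite <- H0. apply nth_indep. lia.
    + intro d. rewrite <- Hn. apply nth_indep. lia.
  - intros [Hl [Hc [H0 Hn]]]. repeat split; auto. intros j d Hj. apply Hc. lia.
Qed.

Definition cat (g1 g2 : list V) := g1 ++ tl g2.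

Lemma cat_nth g1 g2 n1 : length g1 = S n1 -> g2 <> [] -> forall i d,
  nth i (cat g1 g2) d = if (i <=? n1)%nat then nth i g1 d else nth (i - n1) g2 d.
Proof.
  intros Hl Hg i d. destruct g2 as [|b t]; [congruence|]. unfold cat; simpl tl.
  destruct (Nat.leb_spec i n1).
  - rewrite app_nth1; auto. lia.
  - rewrite app_nth2 by lia. replace (i - n1)%nat with (S (i - S n1)) by lia.
    simpl. rewrite Hl. reflexivity.
Qed.

Lemma cat_path r g1 g2 a b c n1 n2 : path' r g1 a b n1 -> path' r g2 b c n2 ->
  path' r (cat g1 g2) a c (n1 + n2).
Proof.
  intros [L1 [S1 [A1 B1]]] [L2 [S2 [A2 B2]]].
  assert (Hg2 : g2 <> []) by (intro E; subst; simpl in L2; lia).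
  pose proof (cat_nth g1 g2 n1 L1 Hg2) as CN.
  split; [|split; [|split]].
  - unfold cat. rewrite length_app. destruct g2; [congruence|]. simpl in *. lia.
  - intros j d Hj. rewrite !CN.
    destruct (Nat.leb_spec j n1); destruct (Nat.leb_spec (S j) n1).
    + apply S1. lia.
    + assert (j = n1) by lia. subst j. rewrite B1, <- (A2 d).
      replace (S n1 - n1)%nat with 1%nat by lia. apply S2. lia.
    + lia.
    + replace (S j - n1)%nat with (S (j - n1)) by lia. apply S2. lia.
  - intro d. rewrite CN. simpl. apply A1.
  - intro d. rewrite CN. destruct (Nat.leb_spec (n1 + n2) n1).
    + replace n2 with 0%nat in * by lia. rewrite Nat.add_0_r, B1, <- (A2 d), B2. auto.
    + replace (n1 + n2 - n1)%nat with n2 by lia. apply B2.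
Qed.

Lemma app_inv_len (l1 l1' t t' : list V) : length l1 = length l1' ->
  l1 ++ t = l1' ++ t' -> l1 = l1' /\ t = t'.
Proof.
  revert l1'. induction l1 as [|a l1 IH]; intros [|a' l1'] Hl E; simpl in *; try lia; auto.
  inversion E; subst. destruct (IH l1') as [-> ->]; auto.
Qed.

Lemma cat_inj r g1 g1' g2 g2' a b c n1 n2 :
  path' r g1 a b n1 -> path' r g1' a b n1 -> path' r g2 b c n2 -> path' r g2' b c n2 ->
  cat g1 g2 = cat g1' g2' -> g1 = g1' /\ g2 = g2'.
Proof.
  intros [L1 _] [L1' _] [L2 [_ [A2 _]]] [L2' [_ [A2' _]]] E.
  apply app_inv_len in E as [-> E]; [|congruence]. split; auto.
  destruct g2 as [|u t]; [simpl in L2; lia|]. destruct g2' as [|u' t']; [simpl in L2'; lia|].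
  simpl in E. subst. specialize (A2 b). specialize (A2' b). simpl in *. congruence.
Qed.

Lemma chain_map (r r' : V -> V -> Prop) (f : V -> V) g :
  (forall u v, r u v -> r' (f u) (f v)) -> chain r g -> chain r' (map f g).
Proof.
  intro Hf. induction g as [|a t IH]; simpl; auto.
  destruct t as [|b t]; simpl; auto. intros [H1 H2]. split; auto.
  apply IH in H2. exact H2.
Qed.

Lemma path_map (r r' : V -> V -> Prop) (f : V -> V) g a b n :
  (forall u v, r u v -> r' (f u) (f v)) -> path_from_to r g a b n ->
  path_from_to r' (map f g) (f a) (f b) n.
Proof.
  intros Hf [Hl [Hc [H0 Hn]]]. split; [|split; [|split]].
  - rewrite length_map; auto.
  - eapply chain_map; eauto.
  - rewrite map_nth, H0; auto.
  - rewrite map_nth, Hn; auto.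
Qed.

Variable p : V -> V -> R.
Hypothesis p_nonneg : forall a b, 0 <= p a b.

Lemma path_prob_nonneg g : 0 <= path_prob p g.
Proof.
  induction g as [|a t IH]; simpl; [lra|]. destruct t as [|b t]; [lra|].
  apply Rmult_le_pos; auto.
Qed.

Lemma path_prob_pos g : p_admissible p g -> 0 < path_prob p g.
Proof.
  unfold p_admissible.
  induction g as [|a t IH]; simpl; [lra|]. destruct t as [|b t]; [lra|].
  intros [H1 H2]. apply Rmult_lt_0_compat; auto.
Qed.

Lemma path_prob_app g1 b t : g1 <> [] -> nth (pred (length g1)) g1 b = b ->
  path_prob p (g1 ++ t) = path_prob p g1 * path_prob p (b :: t).
Proof.
  induction g1 as [|a s IH]; [congruence|]. intros _ Hn.
  destruct s as [|c s].
  - simpl in Hn. subst. simpl. lra.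
  - change ((a :: c :: s) ++ t) with (a :: c :: (s ++ t)).
    change (path_prob p (a :: c :: (s ++ t))) with (p a c * path_prob p ((c :: s) ++ t)).
    change (path_prob p (a :: c :: s)) with (p a c * path_prob p (c :: s)).
    rewrite IH; [lra|congruence|]. simpl in Hn |- *. exact Hn.
Qed.

Lemma path_prob_cat r g1 g2 a b c n1 n2 : path' r g1 a b n1 -> path' r g2 b c n2 ->
  path_prob p (cat g1 g2) = path_prob p g1 * path_prob p g2.
Proof.
  intros [L1 [_ [_ B1]]] [L2 [_ [A2 _]]].
  destruct g2 as [|u t]; [simpl in L2; lia|]. specialize (A2 b). simpl in A2. subst u.
  unfold cat; simpl tl. apply path_prob_app.
  - intro E; subst; simpl in L1; lia.
  - rewrite L1. simpl. apply B1.
Qed.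

Lemma path_prob_map (f : V -> V) : (forall a b, p (f a) (f b) = p a b) ->
  forall g, path_prob p (map f g) = path_prob p g.
Proof.
  intros Hf g. induction g as [|a t IH]; simpl; auto.
  destruct t as [|b t]; simpl; auto. rewrite Hf. f_equal. exact IH.
Qed.

End Paths.

Section Reach.
Context {V : Type} (adj : V -> V -> Prop).

Fixpoint Rch (m : nat) (a c : V) : Prop :=
  match m with
  | O => a = c
  | S m => a = c \/ exists b, adj a b /\ Rch m b c
  end.

Lemma Rch_refl m a : Rch m a a.
Proof. destruct m; simpl; auto. Qed.

Lemma Rch_mono m : forall a c, Rch m a c -> forall m', (m <= m')%nat -> Rch m' a c.
Proof.
  induction m as [|m IH]; intros a c H m' Hm; simpl in H.
  - subst. apply Rch_refl.
  - destruct m' as [|m']; [lia|]. simpl. destruct H as [H|[b [Hab Hb]]]; auto.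
    right. exists b. split; auto. apply (IH b c Hb m'). lia.
Qed.

Lemma Rch_trans m : forall a b c m', Rch m a b -> Rch m' b c -> Rch (m + m') a c.
Proof.
  induction m as [|m IH]; intros a b c m' H1 H2; simpl in *.
  - subst; auto.
  - destruct H1 as [->|[d [Had Hd]]].
    + apply (Rch_mono m' b c H2 (S m + m')). lia.
    + right. exists d. split; auto. eapply IH; eauto.
Qed.

Lemma path_Rch n : forall g a b, path' adj g a b n -> Rch n a b.
Proof.
  induction n as [|n IH]; intros g a b [L [St [A0 Bn]]].
  - simpl. rewrite <- (A0 a), <- (Bn a). reflexivity.
  - destruct g as [|x t]; [simpl in L; lia|].
    pose proof (A0 a) as Ea. simpl in Ea. subst x.
    simpl. right. exists (nth 0 t a). split.
    + apply (St 0%nat a). lia.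
    + apply IH with t. split; [|split; [|split]].
      * simpl in L; lia.
      * intros j d Hj. apply (St (S j) d). lia.
      * intro d. destruct t; simpl in L |- *; [lia|]. reflexivity.
      * intro d. apply (Bn d).
Qed.

Lemma Rch_path m : forall a b, Rch m a b -> exists g n, (n <= m)%nat /\ path_from_to adj g a b n.
Proof.
  induction m as [|m IH]; intros a b H; simpl in H.
  - subst. exists [b], 0%nat. split; auto. repeat split.
  - destruct H as [->|[d [Had Hd]]].
    + exists [b], 0%nat. split; [lia|]. repeat split.
    + destruct (IH d b Hd) as [g [n [Hn Hp]]]. exists (a :: g), (S n). split; [lia|].
      apply path_iff in Hp as [L [St [A0 Bn]]]. apply path_iff.
      split; [|split; [|split]].
      * simpl; lia.
      * intros j e Hj. destruct j as [|j].
        -- simpl. rewrite A0. auto.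
        -- apply St. lia.
      * reflexivity.
      * intro e. simpl. apply Bn.
Qed.

Lemma Rch_auto (f : V -> V) : (forall x y, adj x y -> adj (f x) (f y)) ->
  forall m a b, Rch m a b -> Rch m (f a) (f b).
Proof.
  intros Hf m. induction m as [|m IH]; intros a b H; simpl in *.
  - subst; auto.
  - destruct H as [->|[d [Had Hd]]]; auto. right. exists (f d). split; auto.
Qed.

Lemma union_fin {T} (Q : V -> T -> Prop) l : (forall v, finite (Q v)) ->
  finite (fun t => exists v, In v l /\ Q v t).
Proof.
  intros HQ. induction l as [|a l IH].
  - exists []. intros t [v [[] _]].
  - destruct IH as [L HL]. destruct (HQ a) as [La Ha]. exists (La ++ L).
    intros t [v [[<-|Hv] Hq]]; apply in_or_app; [left; auto|right; apply HL; eauto].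
Qed.

Lemma ball_fin : bounded_valence adj -> forall m a, finite (Rch m a).
Proof.
  intros [D HD] m. induction m as [|m IH]; intro a.
  - exists [a]. intros t H. simpl in H. subst. left; auto.
  - destruct (HD a) as [l [_ Hl]].
    destruct (union_fin (fun b => Rch m b) l IH) as [L HL].
    exists (a :: L). intros t [->|[b [Hab Hb]]]; [left; auto|right].
    apply HL. exists b. auto.
Qed.

Fixpoint words (L : list V) (m : nat) : list (list V) :=
  match m with
  | O => [[]]
  | S m => flat_map (fun v => map (cons v) (words L m)) L
  end.

Lemma in_words L g : (forall v, In v g -> In v L) -> In g (words L (length g)).
Proof.
  induction g as [|a t IH]; intros H; simpl; auto.
  apply in_flat_map. exists a. split; [apply H; left; auto|].
  apply in_map. apply IH. intros; apply H; right; auto.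
Qed.

End Reach.

Lemma nat_unbounded r : exists n, r < INR n.
Proof.
  destruct (archimed (Rabs r)) as [H1 _].
  assert (H : 0 < IZR (up (Rabs r))) by (pose proof (Rabs_pos r); lra).
  apply lt_0_IZR in H. exists (Z.to_nat (up (Rabs r))).
  rewrite INR_IZR_INZ, Z2Nat.id by lia. pose proof (Rle_abs r). lra.
Qed.

Section Main.
Context {V : Type} (adj : V -> V -> Prop) (p : V -> V -> R) (k : nat) (y : V).
Hypothesis Hp0 : forall a b, 0 <= p a b.
Hypothesis Hbv : bounded_valence adj.
Hypothesis Hk : forall a b, dist_gt adj a b k -> p a b = 0.

Definition adm := fun a b => 0 < p a b.
Definition PS a b n g := path_from_to adm g a b n.
Definition Av a b n g := path_from_to adm g a b n /\ forall i, (0 < i < n)%nat -> nth i g a <> y.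

Lemma step_Rch a b : 0 < p a b -> Rch adj k a b.
Proof.
  intro H. destruct (classic (dist_gt adj a b k)) as [D|D].
  - rewrite (Hk a b D) in H. lra.
  - unfold dist_gt in D. apply not_all_ex_not in D as [g D].
    apply not_all_ex_not in D as [n D]. apply imply_to_and in D as [Hp Hn].
    apply path_iff in Hp. apply path_Rch in Hp. apply (Rch_mono adj n); auto. lia.
Qed.

Lemma vert_Rch g a b n : path' adm g a b n -> forall j d, (j <= n)%nat ->
  Rch adj (j * k) a (nth j g d).
Proof.
  intros [L [St [A0 Bn]]] j d. induction j as [|j IH]; intro Hj.
  - rewrite A0. apply Rch_refl.
  - replace (S j * k)%nat with (j * k + k)%nat by lia.
    eapply Rch_trans. apply IH; lia. apply step_Rch. apply St. lia.
Qed.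

Lemma fin_paths a n (P : list V -> Prop) : (forall g, P g -> exists b, path' adm g a b n) ->
  finite P.
Proof.
  intro HP. destruct (ball_fin adj Hbv (n * k) a) as [L HL].
  exists (words L (S n)). intros g Hg. destruct (HP g Hg) as [b Hb].
  pose proof Hb as [Lg _]. rewrite <- Lg. apply in_words.
  intros v Hv. destruct (In_nth g v a Hv) as [j [Hj E]]. subst v. apply HL.
  apply (Rch_mono adj (j * k)). eapply vert_Rch; eauto. lia. nia.
Qed.

Lemma fin_PS a b n : finite (PS a b n).
Proof. apply (fin_paths a n). intros g H. exists b. apply path_iff; auto. Qed.

Lemma fin_Av a b n : finite (Av a b n).
Proof. apply (fin_paths a n). intros g [H _]. exists b. apply path_iff; auto. Qed.

Lemma concat_fsum (P1 P2 P3 : list V -> Prop) a b c n1 n2 :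
  (forall g, P1 g -> PS a b n1 g) -> (forall g, P2 g -> PS b c n2 g) ->
  (forall g, P3 g -> PS a c (n1 + n2) g) ->
  (forall g1 g2, P1 g1 -> P2 g2 -> P3 (cat g1 g2)) ->
  fsum P1 (path_prob p) * fsum P2 (path_prob p) <= fsum P3 (path_prob p).
Proof.
  intros H1 H2 H3 H12.
  assert (F1 : finite P1) by (eapply finite_sub; [apply (fin_PS a b n1)|auto]).
  assert (F2 : finite P2) by (eapply finite_sub; [apply (fin_PS b c n2)|auto]).
  assert (F3 : finite P3) by (eapply finite_sub; [apply (fin_PS a c (n1+n2))|auto]).
  rewrite <- fsum_prod by auto.
  apply (fsum_image _ _ (fun pr => cat (fst pr) (snd pr))).
  - apply finite_prod; auto.
  - auto.
  - intros; apply path_prob_nonneg; auto.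
  - intros [g1 g2] [G1 G2]; simpl. auto.
  - intros [g1 g2] [G1 G2]; simpl. eapply path_prob_cat; auto; apply path_iff.
    apply H1; eauto. apply H2; eauto.
  - intros [g1 g2] [g1' g2'] [G1 G2] [G1' G2'] E; simpl in *.
    destruct (cat_inj adm g1 g1' g2 g2' a b c n1 n2) as [-> ->]; auto; apply path_iff.
    apply H1; auto. apply H1; auto. apply H2; auto. apply H2; auto.
Qed.

Lemma Av_cat a b c n1 n2 g1 g2 : b <> y -> Av a b n1 g1 -> Av b c n2 g2 ->
  Av a c (n1 + n2) (cat g1 g2).
Proof.
  intros Hb [P1 I1] [P2 I2]. apply path_iff in P1, P2.
  pose proof (cat_path _ _ _ _ _ _ _ _ P1 P2) as P3.
  split; [apply path_iff; auto|].
  destruct P1 as [L1 [_ [A1 B1]]]. destruct P2 as [L2 [_ [A2 B2]]].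
  assert (Hg2 : g2 <> []) by (intro E; subst; simpl in L2; lia).
  intros i Hi. rewrite (cat_nth g1 g2 n1 L1 Hg2).
  destruct (Nat.leb_spec i n1).
  - destruct (Nat.eq_dec i n1) as [->|Hne].
    + rewrite B1. auto.
    + apply I1. lia.
  - rewrite (@nth_indep V g2 (i - n1)%nat a b) by lia. apply I2. lia.
Qed.

End Main.

Section Key.
Context {V : Type} (adj : V -> V -> Prop) (Gamma : (V -> V) -> Prop)
  (p : V -> V -> R) (k : nat) (x y : V).
Hypothesis Hp0 : forall a b, 0 <= p a b.
Hypothesis Hbv : bounded_valence adj.
Hypothesis Hk : forall a b, dist_gt adj a b k -> p a b = 0.
Hypothesis HG : is_subgroup_Aut adj Gamma.
Hypothesis HQ : finite_quotient Gamma.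
Hypothesis Hinv : forall f a b, Gamma f -> p (f a) (f b) = p a b.
Hypothesis Hirr : irreducible p.
Hypothesis Hfar : forall M : nat, exists g, in_Ph_first p x y g /\
      exists i, (i < length g)%nat /\ dist_ge adj (nth i g x) y M.

Let fPS := fin_PS adj p k Hbv Hk.
Let fAv := fin_Av adj p k y Hbv Hk.
Let cfs := concat_fsum adj p k Hp0 Hbv Hk.

Lemma pn_PS n a b : pn p n a b = fsum (PS p a b n) (path_prob p).
Proof. reflexivity. Qed.

Lemma PS_cat a b c n1 n2 g1 g2 : PS p a b n1 g1 -> PS p b c n2 g2 ->
  PS p a c (n1 + n2) (cat g1 g2).
Proof.
  unfold PS. rewrite !path_iff. apply cat_path.
Qed.

Lemma pn_nonneg n a b : 0 <= pn p n a b.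
Proof.
  rewrite pn_PS. apply fsum_nonneg. apply fPS.
  intros; apply path_prob_nonneg; auto.
Qed.

Lemma fpn_Av n : fpn p n x y = fsum (Av p y x y n) (path_prob p).
Proof.
  unfold fpn. f_equal. apply functional_extensionality. intro g.
  apply propositional_extensionality. unfold in_Ph_first, Av. split.
  - intros [[m [Hp Hi]] Hl]. destruct Hp as [Lg Hp']. assert (m = n) by (rewrite Lg in Hl; lia).
    subst. split; auto. split; auto.
  - intros [Hp Hi]. split; [exists n; split; auto|]. apply Hp.
Qed.

Lemma fpn_le_pn n : fpn p n x y <= pn p n x y.
Proof.
  rewrite fpn_Av, pn_PS.
  apply (fsum_image _ _ (fun g : list V => g)).
  - apply fAv.
  - apply fPS.
  - intros; apply path_prob_nonneg; auto.
  - intros g [H _]. exact H.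
  - reflexivity.
  - auto.
Qed.

Variable z : R.
Hypothesis Hz : 0 < z.
Hypothesis Hunb : forall C, exists n, C < pn p n x y * z ^ n.

Lemma K1 v : exists n, 1 < pn p n v v * z ^ n.
Proof.
  destruct (Hirr v x) as [a0 Ha0]. destruct (Hirr y v) as [b0 Hb0].
  set (A := pn p a0 v x) in *. set (Cc := pn p b0 y v) in *.
  assert (HZ1 : 0 < z ^ (a0 + b0)) by (apply pow_lt; auto).
  set (Z1 := z ^ (a0 + b0)) in *.
  assert (Hc0 : 0 < A * Cc * Z1) by (apply Rmult_lt_0_compat; auto; apply Rmult_lt_0_compat; auto).
  destruct (Hunb (/ (A * Cc * Z1))) as [N HN].
  exists (a0 + N + b0)%nat.
  assert (E1 : A * pn p N x y <= pn p (a0 + N) v y).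
  { unfold A. rewrite !pn_PS. apply (cfs _ _ _ v x y a0 N); auto.
    intros g1 g2 H1 H2; eapply PS_cat; eauto. }
  assert (E2 : pn p (a0 + N) v y * Cc <= pn p (a0 + N + b0) v v).
  { unfold Cc. rewrite !pn_PS. apply (cfs _ _ _ v y v (a0 + N)%nat b0); auto.
    intros g1 g2 H1 H2; eapply PS_cat; eauto. }
  assert (HB : 0 <= pn p N x y) by apply pn_nonneg.
  assert (HZN : 0 < z ^ N) by (apply pow_lt; auto).
  replace (z ^ (a0 + N + b0)) with (z ^ N * Z1) by (unfold Z1; rewrite !pow_add; ring).
  set (B := pn p N x y) in *. set (ZN := z ^ N) in *.
  assert (H1 : 1 < A * Cc * Z1 * (B * ZN)).
  { apply Rmult_lt_compat_l with (r := A * Cc * Z1) in HN; auto.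
    rewrite Rinv_r in HN; lra. }
  assert (H2 : A * B * Cc <= pn p (a0 + N + b0) v v).
  { eapply Rle_trans; [|apply E2]. apply Rmult_le_compat_r; lra. }
  assert (H3 : A * B * Cc * (ZN * Z1) <= pn p (a0 + N + b0) v v * (ZN * Z1)).
  { apply Rmult_le_compat_r; auto. apply Rmult_le_pos; lra. }
  nra.
Qed.

Lemma K2 (l : list V) : exists N, forall v, In v l ->
  exists n, (n <= N)%nat /\ 1 < pn p n v v * z ^ n.
Proof.
  induction l as [|a l [N HN]].
  - exists 0%nat. intros v [].
  - destruct (K1 a) as [na Ha]. exists (Nat.max na N). intros v [<-|Hv].
    + exists na. split; auto. lia.
    + destruct (HN v Hv) as [n [Hn Hq]]. exists n. split; auto. lia.
Qed.

Lemma K3 : forall C, exists L, C < fpn p L x y * z ^ L.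
Proof.
  intro C. destruct HQ as [l Hl]. destruct (K2 l) as [N HN].
  destruct (Hfar (S (N * k))) as [g [Hg [i [Hi Hd]]]].
  set (w := nth i g x) in *.
  assert (Hwy : w <> y).
  { intro E. rewrite E in Hd. assert (S (N * k) <= 0)%nat; [|lia].
    apply (Hd [y]). repeat split. }
  destruct Hg as [nn [Hpg Hint]].
  pose proof Hpg as Hpg'. apply path_iff in Hpg' as [Lg [Stg [A0g Bng]]].
  assert (Hinn : (i < nn)%nat).
  { destruct (Nat.eq_dec i nn) as [E|E]; [|lia]. exfalso. apply Hwy. unfold w. rewrite E. apply Bng. }
  destruct (Hl w) as [f [v [Hf [Hv Ew]]]].
  destruct (HN v Hv) as [n [HnN Hq]].
  destruct HG as [Haut _]. destruct (Haut f Hf) as [[f' [Hf'1 Hf'2]] Hadj].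
  set (s := fsum (Av p y w w n) (path_prob p)).
  assert (Hs : pn p n v v <= s).
  { rewrite pn_PS. apply (fsum_image _ _ (map f)).
    - apply fPS.
    - apply fAv.
    - intros; apply path_prob_nonneg; auto.
    - intros g' Hg'. split.
      + rewrite Ew. apply path_map with (r := adm p); auto.
        intros u u'. unfold adm. rewrite Hinv; auto.
      + intros i' Hi' E. rewrite Ew, (map_nth f g' v i') in E.
        assert (R1 : Rch adj (i' * k) v (nth i' g' v)).
        { apply path_iff in Hg'. eapply vert_Rch; eauto. lia. }
        pose proof (Rch_auto adj f (fun a b H => proj1 (Hadj a b) H) _ _ _ R1) as R2.
        rewrite E, <- Ew in R2. apply Rch_path in R2 as [g3 [n3 [Hn3 Hp3]]].
        apply Hd in Hp3. assert (i' * k <= N * k)%nat by (apply Nat.mul_le_mono_r; lia). lia.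
    - intros g' _. apply path_prob_map. intros; apply Hinv; auto.
    - intros g1 g2 _ _ E. apply (f_equal (map f')) in E. rewrite !map_map in E.
      rewrite !(map_ext (fun x0 => f' (f x0)) (fun x0 => x0)) in E by auto.
      rewrite !map_id in E. exact E. }
  assert (Hs0 : 0 <= s) by (pose proof (pn_nonneg n v v); lra).
  assert (Hloop : forall m, s ^ m <= fsum (Av p y w w (m * n)) (path_prob p)).
  { induction m as [|m IH].
    - simpl. change 1 with (path_prob p [w]). apply fsum_ge_one.
      + apply fAv.
      + intros; apply path_prob_nonneg; auto.
      + split. repeat split. intros; lia.
    - simpl pow. eapply Rle_trans.
      + apply Rmult_le_compat_l; [exact Hs0|exact IH].
      + change (S m * n)%nat with (n + m * n)%nat.
        apply (cfs _ _ _ w w w n (m * n)%nat); auto.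
        * intros g' [H _]; exact H.
        * intros g' [H _]; exact H.
        * intros g' [H _]; exact H.
        * intros ? ? ? ?; eapply Av_cat; eauto. }
  set (g1 := firstn (S i) g). set (g2 := skipn i g).
  assert (HA1 : Av p y x w i g1).
  { assert (P1 : path' (adm p) g1 x w i).
    { split; [|split; [|split]].
      - unfold g1. rewrite length_firstn. lia.
      - intros j d Hj. unfold g1. rewrite !nth_firstn.
        replace (j <? S i)%nat with true by (symmetry; apply Nat.ltb_lt; lia).
        replace (S j <? S i)%nat with true by (symmetry; apply Nat.ltb_lt; lia).
        apply Stg. lia.
      - intro d. unfold g1. rewrite nth_firstn. simpl. apply A0g.
      - intro d. unfold g1. rewrite nth_firstn.
        replace (i <? S i)%nat with true by (symmetry; apply Nat.ltb_lt; lia).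
        unfold w. apply nth_indep. lia. }
    split; [apply path_iff; auto|].
    intros j Hj. unfold g1. rewrite nth_firstn.
    replace (j <? S i)%nat with true by (symmetry; apply Nat.ltb_lt; lia). apply Hint. lia. }
  assert (HA2 : Av p y w y (nn - i) g2).
  { assert (P2 : path' (adm p) g2 w y (nn - i)).
    { split; [|split; [|split]].
      - unfold g2. rewrite length_skipn. lia.
      - intros j d Hj. unfold g2. rewrite !nth_skipn.
        replace (i + S j)%nat with (S (i + j)) by lia. apply Stg. lia.
      - intro d. unfold g2. rewrite nth_skipn. rewrite Nat.add_0_r. unfold w. apply nth_indep. lia.
      - intro d. unfold g2. rewrite nth_skipn. replace (i + (nn - i))%nat with nn by lia. apply Bng. }
    split; [apply path_iff; auto|].
    intros j Hj. unfold g2. rewrite nth_skipn. rewrite (@nth_indep V g (i + j)%nat w x) by lia.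
    apply Hint. lia. }
  set (pi1 := path_prob p g1). set (pi2 := path_prob p g2).
  assert (Hpi1 : 0 < pi1).
  { apply path_prob_pos. destruct HA1 as [[_ [H _]] _]. exact H. }
  assert (Hpi2 : 0 < pi2).
  { apply path_prob_pos. destruct HA2 as [[_ [H _]] _]. exact H. }
  assert (F1 : pi1 <= fsum (Av p y x w i) (path_prob p)).
  { apply fsum_ge_one; [apply fAv| intros; apply path_prob_nonneg; auto| exact HA1]. }
  assert (F2 : pi2 <= fsum (Av p y w y (nn - i)) (path_prob p)).
  { apply fsum_ge_one; [apply fAv| intros; apply path_prob_nonneg; auto| exact HA2]. }
  assert (Hmain : forall m, pi1 * s ^ m * pi2 <= fpn p (i + m * n + (nn - i)) x y).
  { intro m. rewrite fpn_Av.
    assert (G1 : fsum (Av p y x w i) (path_prob p) * fsum (Av p y w w (m * n)) (path_prob p)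
                 <= fsum (Av p y x w (i + m * n)) (path_prob p)).
    { apply (cfs _ _ _ x w w i (m * n)%nat); auto.
      1-3: intros g' [H _]; exact H.
      intros ? ? ? ?; eapply Av_cat; eauto. }
    assert (G2 : fsum (Av p y x w (i + m * n)) (path_prob p) * fsum (Av p y w y (nn - i)) (path_prob p)
                 <= fsum (Av p y x y (i + m * n + (nn - i))) (path_prob p)).
    { apply (cfs _ _ _ x w y (i + m * n)%nat (nn - i)%nat); auto.
      1-3: intros g' [H _]; exact H.
      intros ? ? ? ?; eapply Av_cat; eauto. }
    assert (0 <= s ^ m) by (apply pow_le; auto).
    eapply Rle_trans; [|apply G2]. apply Rmult_le_compat; try lra.
    - apply Rmult_le_pos; lra.
    - eapply Rle_trans; [|apply G1]. apply Rmult_le_compat; auto; lra. }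
  set (q := pn p n v v * z ^ n) in *.
  set (c := pi1 * z ^ i * (pi2 * z ^ (nn - i))).
  assert (Hc : 0 < c).
  { unfold c. assert (0 < z ^ i) by (apply pow_lt; auto).
    assert (0 < z ^ (nn - i)) by (apply pow_lt; auto).
    apply Rmult_lt_0_compat; apply Rmult_lt_0_compat; auto. }
  destruct (nat_unbounded (C / (c * (q - 1)))) as [m Hm].
  exists (i + m * n + (nn - i))%nat.
  assert (Hsq : q <= s * z ^ n).
  { unfold q. apply Rmult_le_compat_r; auto. apply pow_le; lra. }
  assert (Hqm : q ^ m <= (s * z ^ n) ^ m) by (apply pow_incr; lra).
  assert (Hbern : 1 + INR m * (q - 1) <= q ^ m).
  { replace q with (1 + (q - 1)) at 2 by ring. apply Rle_pow_lin. lra. }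
  assert (Hz' : z ^ (i + m * n + (nn - i)) = z ^ i * (z ^ n) ^ m * z ^ (nn - i)).
  { rewrite !pow_add. rewrite Nat.mul_comm, pow_mult. reflexivity. }
  assert (HL : c * q ^ m <= fpn p (i + m * n + (nn - i)) x y * z ^ (i + m * n + (nn - i))).
  { rewrite Hz'. eapply Rle_trans; [|apply Rmult_le_compat_r; [|apply Hmain]].
    - unfold c.
      assert (0 <= z ^ i) by (apply pow_le; lra).
      assert (0 <= z ^ (nn - i)) by (apply pow_le; lra).
      assert (0 <= q ^ m) by (apply pow_le; lra).
      assert (q ^ m <= s ^ m * (z ^ n) ^ m) by (rewrite <- Rpow_mult_distr; auto).
      assert (0 <= pi1 * z ^ i * (pi2 * z ^ (nn - i))) by (apply Rmult_le_pos; apply Rmult_le_pos; lra).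
      replace (pi1 * s ^ m * pi2 * (z ^ i * (z ^ n) ^ m * z ^ (nn - i)))
        with (pi1 * z ^ i * (pi2 * z ^ (nn - i)) * (s ^ m * (z ^ n) ^ m)) by ring.
      apply Rmult_le_compat_l; auto.
    - assert (0 <= z ^ n) by (apply pow_le; lra). apply Rmult_le_pos; [apply Rmult_le_pos|]; apply pow_le; lra. }
  assert (Hq1 : 0 < q - 1) by lra.
  assert (HC : C < c * (1 + INR m * (q - 1))).
  { assert (E : C = C / (c * (q - 1)) * (c * (q - 1))) by (field; lra).
    rewrite E. assert (0 < c * (q - 1)) by (apply Rmult_lt_0_compat; lra).
    assert (C / (c * (q - 1)) * (c * (q - 1)) < INR m * (c * (q - 1))).
    { apply Rmult_lt_compat_r; auto. }
    nra. }
  assert (c * (1 + INR m * (q - 1)) <= c * q ^ m) by (apply Rmult_le_compat_l; lra).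
  lra.
Qed.

End Key.
Theorem proposition3p8
  (V : Type) (adj : V -> V -> Prop) (Gamma : (V -> V) -> Prop)
  (p : V -> V -> R) (k : nat) (x y : V) :
  is_tree adj ->
  infinite_type V ->
  bounded_valence adj ->
  min_degree_3 adj ->
  is_subgroup_Aut adj Gamma ->
  finite_quotient Gamma ->
  transition_kernel p ->
  (forall f a b, Gamma f -> p (f a) (f b) = p a b) ->
  irreducible p ->
  (forall a b, dist_gt adj a b k -> p a b = 0) ->
  (forall M : nat, exists g, in_Ph_first p x y g /\
      exists i, (i < length g)%nat /\ dist_ge adj (nth i g x) y M) ->
  CV_radius (fun n => fpn p n x y) = CV_radius (fun n => pn p n x y).
Proof.
  intros _ _ Hbv _ HG HQ [Hp01 _] Hinv Hirr Hk Hfar.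
  assert (Hp0 : forall a b, 0 <= p a b) by (intros; apply Hp01).
  assert (Fnn : forall n, 0 <= fpn p n x y).
  { intro n. rewrite (fpn_Av p x y). apply fsum_nonneg.
    apply (fin_Av adj p k y Hbv Hk). intros; apply path_prob_nonneg; auto. }
  assert (Pnn : forall n, 0 <= pn p n x y) by (intro; apply pn_nonneg with adj k; auto).
  apply Rbar_le_antisym.
  - destruct (CV_radius_bounded (fun n => fpn p n x y)) as [_ Hlub]. apply Hlub.
    intros z [M HM].
    destruct (Rle_lt_dec z 0) as [Hz|Hz].
    + apply Rbar_le_trans with (Finite 0); [simpl; lra|apply CV_radius_ge_0].
    + destruct (classic (exists M', forall n, Rabs (pn p n x y * z ^ n) <= M')) as [Hb|Hnb].
      * apply (proj1 (CV_radius_bounded _)). exact Hb.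
      * exfalso.
        assert (Hunb : forall C, exists n, C < pn p n x y * z ^ n).
        { intro C. apply not_ex_all_not with (n := C) in Hnb.
          apply not_all_ex_not in Hnb as [n Hn]. exists n.
          apply Rnot_le_lt in Hn. rewrite Rabs_pos_eq in Hn; auto.
          apply Rmult_le_pos; auto. apply pow_le; lra. }
        destruct (K3 adj Gamma p k x y Hp0 Hbv Hk HG HQ Hinv Hirr Hfar z Hz Hunb M) as [L HL].
        specialize (HM L). pose proof (Rle_abs (fpn p L x y * z ^ L)). lra.
  - destruct (CV_radius_bounded (fun n => pn p n x y)) as [_ Hlub]. apply Hlub.
    intros z [M HM]. apply (proj1 (CV_radius_bounded _)). exists M. intro n.
    eapply Rle_trans; [|apply (HM n)]. rewrite !Rabs_mult.
    apply Rmult_le_compat_r; [apply Rabs_pos|].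
    rewrite !Rabs_pos_eq; auto. apply fpn_le_pn with adj k; auto.
Qed.
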